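(* Consider the one-dimensional Euler equations for an ideal gas with $\gamma>1$, and the first order finite volume scheme on a moving mesh \[ h_j^{n+1}\,\bar U_j^{n+1} = h_j^n\,\bar U_j^n - \Delta t_n\,\big[\hat G_{j+1/2}^n - \hat G_{j-1/2}^n\big],\qquad h_j^{n+1} = h_j^n + \Delta t_n\,(w_{j+1/2}^n - w_{j-1/2}^n), \] where $\hat G_{j+1/2}^n = \hat G(\bar U_j^n,\bar U_{j+1}^n,w_{j+1/2}^n)$ is the ALE Rusanov flux with wave speed $\lambda_{j+1/2}^n=\lambda(\bar U_j^n,\bar U_{j+1}^n,w_{j+1/2}^n)$. Fix $\beta\in(0,1)$ and suppose the time step satisfies \[ \Delta t_n \le \min_j\left\{ \frac{(1-\tfrac12\beta)\,h_j^n}{\tfrac12(\lambda_{j-1/2}^n+\lambda_{j+1/2}^n)},\ \frac{\beta\, h_j^n}{|w_{j+1/2}^n - w_{j-1/2}^n|}\right\} \] (the second term is read as $+\infty$ when $w_{j+1/2}^n=w_{j-1/2}^n$). If $\rho_j^n>0$ and $p_j^n>0$ for all $j$, then $h_j^{n+1}>0$, $\rho_j^{n+1}>0$ and $p_j^{n+1}>0$ for all $j$. In other words, the scheme is positivity preserving.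
   Context: Euler equations: $U_t + f(U)_x=0$ with $U=(\rho,\rho v,E)^\top$ and $f(U)=(\rho v,\ p+\rho v^2,\ (E+p)v)^\top$. Here $E=p/(\gamma-1)+\rho v^2/2$ and the sound speed is $c=\sqrt{\gamma p/\rho}$. Mesh: cells $C_j$ have length $h_j^n>0$ at time $t_n$. Each cell face $x_{j+1/2}$ moves with a constant velocity $w_{j+1/2}^n$ on the interval $(t_n,t_{n+1})$. The index $j$ runs over all cells, each of which has two neighbours (for example an infinite or a periodic mesh). $\bar U_j^n$ denotes the cell value, with density $\rho_j^n$, velocity $v_j^n$, pressure $p_j^n$ and sound speed $c_j^n$. ALE flux: $G(U,w)=f(U)-wU$. ALE Rusanov flux: \[ \hat G(U_l,U_r,w)=\tfrac12[G(U_l,w)+G(U_r,w)]-\tfrac12\lambda(U_l,U_r,w)(U_r-U_l), \] with $\lambda(U_l,U_r,w)=\max\{|v_l-w|+c_l,\ |v_r-w|+c_r\}$. *)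

(* Defs.v *)
From Stdlib Require Import Reals Lra ZArith.
Open Scope R_scope.

(* Conserved state U = (rho, rho v, E). *)
Record st := mkSt { s_rho : R; s_mom : R; s_E : R }.

Definition st_add (A B : st) : st :=
  mkSt (s_rho A + s_rho B) (s_mom A + s_mom B) (s_E A + s_E B).
Definition st_scale (a : R) (A : st) : st :=
  mkSt (a * s_rho A) (a * s_mom A) (a * s_E A).
Definition st_sub (A B : st) : st := st_add A (st_scale (-1) B).

Definition vel (U : st) : R := s_mom U / s_rho U.
Definition pres (gamma : R) (U : st) : R :=
  (gamma - 1) * (s_E U - (s_mom U)^2 / (2 * s_rho U)).
Definition sound (gamma : R) (U : st) : R :=
  sqrt (gamma * pres gamma U / s_rho U).

Definition flux (gamma : R) (U : st) : st :=
  mkSt (s_rho U * vel U)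
       (pres gamma U + s_rho U * (vel U)^2)
       ((s_E U + pres gamma U) * vel U).

Definition ale_flux (gamma : R) (U : st) (w : R) : st :=
  st_sub (flux gamma U) (st_scale w U).

Definition lam (gamma : R) (Ul Ur : st) (w : R) : R :=
  Rmax (Rabs (vel Ul - w) + sound gamma Ul) (Rabs (vel Ur - w) + sound gamma Ur).

Definition rusanov (gamma : R) (Ul Ur : st) (w : R) : st :=
  st_sub (st_scale (1/2) (st_add (ale_flux gamma Ul w) (ale_flux gamma Ur w)))
         (st_scale ((1/2) * lam gamma Ul Ur w) (st_sub Ur Ul)).

(* Index conventions: cells j : Z; w j denotes w_{j+1/2}, so w (j-1) is w_{j-1/2}.
   Ghat j denotes \hat G_{j+1/2}^n, lamh j denotes lambda_{j+1/2}^n. *)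
Definition Ghat (gamma : R) (U : Z -> st) (w : Z -> R) (j : Z) : st :=
  rusanov gamma (U j) (U (j + 1)%Z) (w j).
Definition lamh (gamma : R) (U : Z -> st) (w : Z -> R) (j : Z) : R :=
  lam gamma (U j) (U (j + 1)%Z) (w j).

Definition h_new (h : Z -> R) (w : Z -> R) (dt : R) (j : Z) : R :=
  h j + dt * (w j - w (j - 1)%Z).

Definition U_new (gamma : R) (h : Z -> R) (U : Z -> st) (w : Z -> R) (dt : R)
    (j : Z) : st :=
  st_scale (/ h_new h w dt j)
    (st_sub (st_scale (h j) (U j))
            (st_scale dt (st_sub (Ghat gamma U w j) (Ghat gamma U w (j - 1)%Z)))).

(* Main.v *)
Require Import Defs.
From Stdlib Require Import Reals ZArith Lra Psatz.
Open Scope R_scope.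

Definition ie (A : st) : R := s_E A - (s_mom A)^2 / (2 * s_rho A).
Definition adm (A : st) : Prop := 0 < s_rho A /\ 0 < ie A.

Lemma divpos x y z : 0 < z -> y < x * z -> 0 < x - y / z.
Proof. intros Hz H. apply Rlt_0_minus. apply (Rmult_lt_reg_r z); auto.
  unfold Rdiv. rewrite Rmult_assoc, Rinv_l by lra. lra. Qed.

Lemma repr A : 0 < s_rho A ->
  A = mkSt (s_rho A) (s_rho A * vel A) (ie A + s_rho A * vel A ^ 2 / 2).
Proof. destruct A as [r m E]; simpl; intros. unfold ie, vel; simpl. f_equal; field; lra. Qed.

Lemma key_comb k rA vA qA rB vB qB : 0 <= k -> 0 < rA -> 0 < qA -> 0 < rB -> 0 < qB ->
  0 < (k*(qA + rA*vA^2/2) + (qB + rB*vB^2/2)) - (k*(rA*vA)+ rB*vB)^2/(2*(k*rA+rB)).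
Proof. intros. apply divpos. nra.
  assert (0 <= k*rA*rB*(vA-vB)^2).
  { apply Rmult_le_pos; [apply Rmult_le_pos; [apply Rmult_le_pos|]|]; try lra. apply pow2_ge_0. }
  assert (0 < (k*rA+rB)*(k*qA+qB)) by (apply Rmult_lt_0_compat; nra).
  match goal with |- ?y < ?x * ?z => assert (x*z - y = 2*((k*rA+rB)*(k*qA+qB)) + k*rA*rB*(vA-vB)^2) by (field; lra) end.
  lra. Qed.

Lemma adm_comb k A B : 0 <= k -> adm A -> adm B -> adm (st_add (st_scale k A) B).
Proof. intros Hk [HA1 HA2] [HB1 HB2].
  rewrite (repr A HA1), (repr B HB1). unfold adm, ie. cbn [s_E s_mom s_rho st_scale st_add st_sub flux]. split. nra.
  replace (2 * (k * s_rho A + s_rho B)) with (2 * (k * s_rho A + s_rho B)) by ring.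
  apply key_comb; auto. Qed.

Lemma adm_scale k A : 0 < k -> adm A -> adm (st_scale k A).
Proof. intros Hk [H1 H2]. unfold adm, ie in *; cbn [s_E s_mom s_rho st_scale st_add st_sub]. split. apply Rmult_lt_0_compat; lra.
  replace (k * s_E A - (k * s_mom A) ^ 2 / (2 * (k * s_rho A))) with
    (k * (s_E A - s_mom A ^ 2 / (2 * s_rho A))) by (field; lra). apply Rmult_lt_0_compat; lra. Qed.

Lemma pres_ie g A : pres g A = (g - 1) * ie A.
Proof. reflexivity. Qed.

Lemma sound_sq g U : 1 < g -> 0 < s_rho U -> 0 < pres g U ->
  0 < sound g U /\ sound g U * sound g U = g * pres g U / s_rho U.
Proof. intros. unfold sound. assert (0 < g * pres g U / s_rho U).
  { apply Rdiv_lt_0_compat; nra. }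
  split. apply sqrt_lt_R0; auto. apply sqrt_sqrt; lra. Qed.

Lemma vel_mk r v E : 0 < r -> vel (mkSt r (r*v) E) = v.
Proof. intros; unfold vel; simpl; field; lra. Qed.
Lemma pres_mk g r v q : 0 < r -> pres g (mkSt r (r*v) (q + r*v^2/2)) = (g-1)*q.
Proof. intros; unfold pres; simpl; field; lra. Qed.

Lemma nb_alg g s v q r a : 1 < g -> (s = 1 \/ s = -1) -> 0 < r -> 0 < q -> 0 < a ->
  r * (a*a) >= g * ((g-1) * q) ->
  0 < (s * v + a) * r + - s * (r * v) /\
  0 < (s * v + a) * (q + r * v ^ 2 / 2) + - s * ((q + r * v ^ 2 / 2 + (g - 1) * q) * v) -
   ((s * v + a) * (r * v) + - s * ((g - 1) * q + r * v ^ 2)) ^ 2 /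
   (2 * ((s * v + a) * r + - s * (r * v))).
Proof. intros Hg Hs Hr Hq Ha H.
  assert (Hs2 : s * s = 1) by (destruct Hs; subst; ring).
  assert (E1 : (s * v + a) * r + - s * (r * v) = a*r) by ring.
  rewrite E1.
  destruct Hs; subst s.
  - split. nra. apply divpos. nra.
    match goal with |- ?y < ?x * ?z => assert (x*z - y = q * (2*r*(a*a) - (g-1)^2*q)) by (field; lra) end.
    assert (0 < 2*r*(a*a) - (g-1)^2*q) by nra.
    assert (0 < q * (2*r*(a*a) - (g-1)^2*q)) by (apply Rmult_lt_0_compat; lra). lra.
  - split. nra. apply divpos. nra.
    match goal with |- ?y < ?x * ?z => assert (x*z - y = q * (2*r*(a*a) - (g-1)^2*q)) by (field; lra) end.
    assert (0 < 2*r*(a*a) - (g-1)^2*q) by nra.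
    assert (0 < q * (2*r*(a*a) - (g-1)^2*q)) by (apply Rmult_lt_0_compat; lra). lra.
Qed.

Lemma nb_gen g U al s : 1 < g -> 0 < s_rho U -> 0 < pres g U ->
  sound g U <= al - s * vel U ->  (s = 1 \/ s = -1) ->
  adm (st_add (st_scale al U) (st_scale (-s) (flux g U))).
Proof. intros Hg Hr Hp Ha Hs.
  destruct (sound_sq g U Hg Hr Hp) as [Hc Hc2].
  assert (Hpr : pres g U = (g-1) * ie U) by reflexivity.
  rewrite Hpr in Hp, Hc2.
  assert (Hq : 0 < ie U) by (destruct (Rle_or_lt (ie U) 0); [nra|lra]).
  set (a := al - s * vel U) in *.
  assert (Hap : 0 < a) by lra.
  assert (Ha2 : a * a >= g * ((g-1) * ie U) / s_rho U) by nra.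
  assert (Hal : al = s * vel U + a) by (unfold a; ring).
  rewrite Hal.
  assert (Ha3 : s_rho U * (a*a) >= g * ((g-1) * ie U)).
  { apply Rge_le in Ha2. apply Rle_ge.
    apply (Rmult_le_reg_r (/ s_rho U)). apply Rinv_0_lt_compat; auto.
    replace (s_rho U * (a*a) * / s_rho U) with (a*a) by (field; lra). lra. }
  assert (Hm : s_mom U = s_rho U * vel U) by (unfold vel; field; lra).
  assert (HE : s_E U = ie U + s_rho U * vel U ^ 2 / 2) by (unfold ie; rewrite Hm; field; lra).
  unfold adm. unfold ie at 1. unfold flux. cbn [s_E s_mom s_rho st_scale st_add st_sub].
  rewrite Hpr, Hm, HE.
  clearbody a.
  generalize (vel U) (ie U) (s_rho U) Hr Hq Ha3 Hap. clear - Hg Hs.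
  intros v q r Hr Hq Ha3 Hap.
  replace (- s * (r * v)) with (- s * (r * v)) by ring.
  apply nb_alg; auto.
Qed.
Theorem theorem1 (gamma beta dt : R) (h w : Z -> R) (U : Z -> st)
  (Hgamma : 1 < gamma)
  (Hbeta : 0 < beta < 1)
  (Hdt : 0 < dt)
  (Hh : forall j, 0 < h j)
  (Hrho : forall j, 0 < s_rho (U j))
  (Hp : forall j, 0 < pres gamma (U j))
  (HCFL1 : forall j,
      dt <= (1 - beta / 2) * h j
            / ((lamh gamma U w (j - 1)%Z + lamh gamma U w j) / 2))
  (HCFL2 : forall j, w j <> w (j - 1)%Z ->
      dt <= beta * h j / Rabs (w j - w (j - 1)%Z)) :
  forall j,
    0 < h_new h w dt j /\
    0 < s_rho (U_new gamma h U w dt j) /\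
    0 < pres gamma (U_new gamma h U w dt j).
Proof.
  intro j.
  assert (Hj1 : (j - 1 + 1)%Z = j) by ring.
  set (lp := lamh gamma U w j). set (lm := lamh gamma U w (j-1)%Z).
  assert (Hlp : Rabs (vel (U j) - w j) + sound gamma (U j) <= lp /\
                Rabs (vel (U (j+1)%Z) - w j) + sound gamma (U (j+1)%Z) <= lp).
  { unfold lp, lamh, lam. split; [apply Rmax_l | apply Rmax_r]. }
  assert (Hlm : Rabs (vel (U (j-1)%Z) - w (j-1)%Z) + sound gamma (U (j-1)%Z) <= lm /\
                Rabs (vel (U j) - w (j-1)%Z) + sound gamma (U j) <= lm).
  { unfold lm, lamh, lam. rewrite Hj1. split; [apply Rmax_l | apply Rmax_r]. }
  destruct Hlp as [Hlp1 Hlp2]. destruct Hlm as [Hlm1 Hlm2].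
  pose proof (sound_sq gamma (U j) Hgamma (Hrho j) (Hp j)) as [Hc0 _].
  pose proof (sound_sq gamma (U (j+1)%Z) Hgamma (Hrho _) (Hp _)) as [Hc1 _].
  pose proof (sound_sq gamma (U (j-1)%Z) Hgamma (Hrho _) (Hp _)) as [Hc2 _].
  pose proof (Rabs_pos (vel (U j) - w j)). pose proof (Rabs_pos (vel (U j) - w (j-1)%Z)).
  assert (Hlpos : 0 < lm + lp) by lra.
  assert (C1 : dt * ((lm + lp) / 2) <= (1 - beta/2) * h j).
  { pose proof (HCFL1 j) as HH. fold lp lm in HH.
    apply (Rmult_le_compat_r ((lm + lp)/2)) in HH; [|lra].
    replace ((1 - beta / 2) * h j / ((lm + lp) / 2) * ((lm + lp) / 2)) with ((1 - beta / 2) * h j) in HH by (field; lra). lra. }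
  pose proof (Hh j) as Hhj.
  assert (C2 : dt * Rabs (w j - w (j-1)%Z) <= beta * h j).
  { destruct (Req_dec (w j) (w (j-1)%Z)) as [E|E].
    - rewrite E, Rminus_diag, Rabs_R0. nra.
    - pose proof (HCFL2 j E) as HH.
      assert (0 < Rabs (w j - w (j-1)%Z)) by (apply Rabs_pos_lt; lra).
      apply (Rmult_le_compat_r (Rabs (w j - w (j-1)%Z))) in HH; [|lra].
      replace (beta * h j / Rabs (w j - w (j - 1)%Z) * Rabs (w j - w (j - 1)%Z)) with (beta * h j) in HH by (field; lra). lra. }
  pose proof (Rle_abs (w j - w (j-1)%Z)).
  pose proof (Rle_abs (- (w j - w (j-1)%Z))). rewrite Rabs_Ropp in H2.
  assert (Hhn : 0 < h_new h w dt j) by (unfold h_new; nra).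
  split; [exact Hhn|].
  set (c := h j + dt/2 * (w j - w (j-1)%Z) - dt/2 * (lp + lm)).
  assert (Hc : 0 <= c) by (unfold c; nra).
  set (RR := st_add (st_scale (lp + w j) (U (j+1)%Z)) (st_scale (-1) (flux gamma (U (j+1)%Z)))).
  set (LL := st_add (st_scale (lm - w (j-1)%Z) (U (j-1)%Z)) (st_scale (- -1) (flux gamma (U (j-1)%Z)))).
  assert (HR : adm RR).
  { apply (nb_gen gamma _ _ 1); auto. pose proof (Rle_abs (vel (U (j + 1)%Z) - w j)). lra. }
  assert (HL : adm LL).
  { apply (nb_gen gamma _ _ (-1)); auto. pose proof (Rle_abs (-(vel (U (j - 1)%Z) - w (j-1)%Z))).
    rewrite Rabs_Ropp in H3. lra. }
  assert (HS : adm (st_add (st_scale c (U j))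
               (st_add (st_scale 1 (st_scale (dt/2) RR)) (st_scale (dt/2) LL)))).
  { apply adm_comb; auto. split; auto. pose proof (Hp j) as Hpj. rewrite pres_ie in Hpj. destruct (Rle_or_lt (ie (U j)) 0); [nra|lra].
    apply adm_comb; try lra; apply adm_scale; auto; lra. }
  assert (Heq : U_new gamma h U w dt j = st_scale (/ h_new h w dt j)
               (st_add (st_scale c (U j))
               (st_add (st_scale 1 (st_scale (dt/2) RR)) (st_scale (dt/2) LL)))).
  { unfold U_new. f_equal. unfold Ghat, rusanov, ale_flux. rewrite Hj1.
    unfold RR, LL, c, lp, lm, lamh. rewrite ?Hj1.
    unfold RR, LL, c, st_sub, st_add, st_scale. cbn [s_rho s_mom s_E]. f_equal; field. }
  rewrite Heq.
  assert (HA : adm (st_scale (/ h_new h w dt j) (st_add (st_scale c (U j))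
               (st_add (st_scale 1 (st_scale (dt/2) RR)) (st_scale (dt/2) LL))))).
  { apply adm_scale; auto. apply Rinv_0_lt_compat; auto. }
  destruct HA as [HA1 HA2]. split; auto. rewrite pres_ie. nra.
Qed.
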